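(* Let $(A,f)$ be a finite-dimensional quadratic Lie algebra over a field $\mathbb{K}$ of characteristic zero, let $d$ be an $f$-skew-symmetric derivation of $A$, and let $(A_b,f_b)$ be the one-dimensional double extension of $(A,f)$ by $(b,d)$. Then $A_b$ is reduced if and only if $d$ is not an inner derivation of $A$, $A_b^2=(\mathrm{im}\,d+A^2)\oplus\mathbb{K}\beta$, and $Z(A)\cap\ker d\subseteq \mathrm{im}\,d+A^2$.
   Context: A quadratic Lie algebra $(A,f)$ is a Lie algebra with a non-degenerate symmetric bilinear form $f$ satisfying $f([x,y],z)+f(y,[x,z])=0$. A derivation $d$ is $f$-skew-symmetric if $f(d(x),y)+f(x,d(y))=0$ for all $x,y$. The one-dimensional double extension of $(A,f)$ by $(b,d)$ is the vector space $A_b=\mathbb{K}b\oplus A\oplus\mathbb{K}\beta$ with bracket $[\lambda b+a+\mu\beta,\lambda' b+a'+\mu'\beta]=\lambda d(a')-\lambda' d(a)+[a,a']_A+f(d(a),a')\beta$ and symmetric form $f_b(\lambda b+a+\mu\beta,\lambda' b+a'+\mu'\beta)=\lambda\mu'+\lambda'\mu+f(a,a')$. A Lie algebra $L$ is reduced if $Z(L)\subseteq L^2=[L,L]$. *)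

(* Defs.v *)
From HB Require Import structures.
From mathcomp Require Import all_boot all_order all_algebra.
Set Implicit Arguments. Unset Strict Implicit. Unset Printing Implicit Defensive.
Import GRing.Theory.
Local Open Scope ring_scope.

Section Defs.
Variable K : fieldType.

Section Generic.
Variable T : zmodType.
Variable br : T -> T -> T.

Definition in_center (x : T) : Prop := forall y, br x y = 0.

(* derived algebra L^2 = [L,L]: finite sums of brackets (scalars are absorbed
   by bilinearity, so this is the linear span of all brackets) *)
Definition in_derived (x : T) : Prop :=
  exists s : seq (T * T), x = \sum_(p <- s) br p.1 p.2.

Definition is_reduced : Prop := forall x, in_center x -> in_derived x.
End Generic.

Variable V : vectType K.

Definition bilinear_br (br : V -> V -> V) : Prop :=
  (forall a x y z, br (a *: x + y) z = a *: br x z + br y z) /\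
  (forall a x y z, br z (a *: x + y) = a *: br z x + br z y).

Definition is_lie (br : V -> V -> V) : Prop :=
  [/\ bilinear_br br,
      (forall x, br x x = 0) &
      (forall x y z, br x (br y z) + br y (br z x) + br z (br x y) = 0)].

Definition is_quadratic_form (br : V -> V -> V) (f : V -> V -> K) : Prop :=
  [/\ (forall a x y z, f (a *: x + y) z = a * f x z + f y z),
      (forall x y, f x y = f y x),
      (forall x, (forall y, f x y = 0) -> x = 0) &
      (forall x y z, f (br x y) z + f y (br x z) = 0)].

Definition quadratic_lie (br : V -> V -> V) (f : V -> V -> K) : Prop :=
  is_lie br /\ is_quadratic_form br f.

Definition is_derivation (br : V -> V -> V) (d : V -> V) : Prop :=
  (forall a x y, d (a *: x + y) = a *: d x + d y) /\
  (forall x y, d (br x y) = br (d x) y + br x (d y)).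

Definition f_skew_symmetric (f : V -> V -> K) (d : V -> V) : Prop :=
  forall x y, f (d x) y + f x (d y) = 0.

Definition inner_derivation (br : V -> V -> V) (d : V -> V) : Prop :=
  exists a, forall x, d x = br a x.

Definition in_imd_plus_derived (br : V -> V -> V) (d : V -> V) (x : V) : Prop :=
  exists u w, in_derived br w /\ x = d u + w.

(* The one-dimensional double extension A_b = K b (+) A (+) K beta,
   an element lambda b + a + mu beta is represented by ((lambda, a), mu). *)
Definition dext_br (br : V -> V -> V) (f : V -> V -> K) (d : V -> V)
  (z w : (K * V * K)%type) : (K * V * K)%type :=
  let: (l, a, _) := z in let: (l', a', _) := w in
  (0, l *: d a' - l' *: d a + br a a', f (d a) a').

Definition dext_form (f : V -> V -> K) (z w : (K * V * K)%type) : K :=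
  let: (l, a, m) := z in let: (l', a', m') := w in
  l * m' + l' * m + f a a'.

End Defs.

(* Main.v *)
Require Import Defs.
From mathcomp Require Import all_boot all_order all_algebra.
Local Open Scope ring_scope.
Import GRing.Theory.

Lemma pairD (U W : nmodType) (a b : U * W) : a + b = (a.1 + b.1, a.2 + b.2).
Proof. by []. Qed.

Section Aux.
Context {K : fieldType} {V : vectType K}.

Lemma lin0 {g : V -> V} : (forall a x y, g (a *: x + y) = a *: g x + g y) -> g 0 = 0.
Proof.
move=> H; have := H 1 0 0; rewrite !scale1r addr0 => E.
by apply: (addrI (g 0)); rewrite -E addr0.
Qed.

Lemma linD {g : V -> V} : (forall a x y, g (a *: x + y) = a *: g x + g y) ->
  forall x y, g (x + y) = g x + g y.
Proof. by move=> H x y; have := H 1 x y; rewrite !scale1r. Qed.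

Lemma linZ {g : V -> V} : (forall a x y, g (a *: x + y) = a *: g x + g y) ->
  forall c x, g (c *: x) = c *: g x.
Proof. by move=> H c x; have := H c x 0; rewrite !addr0 (lin0 H) addr0. Qed.

Lemma linN {g : V -> V} : (forall a x y, g (a *: x + y) = a *: g x + g y) ->
  forall x, g (- x) = - g x.
Proof. by move=> H x; rewrite -scaleN1r (linZ H) scaleN1r. Qed.

Lemma flin0 {g : V -> K} : (forall a x y, g (a *: x + y) = a * g x + g y) -> g 0 = 0.
Proof.
move=> H; have := H 1 0 0; rewrite scale1r addr0 mul1r => E.
by apply: (addrI (g 0)); rewrite -E addr0.
Qed.

Lemma flinD {g : V -> K} : (forall a x y, g (a *: x + y) = a * g x + g y) ->
  forall x y, g (x + y) = g x + g y.
Proof. by move=> H x y; have := H 1 x y; rewrite scale1r mul1r. Qed.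

Lemma flinZ {g : V -> K} : (forall a x y, g (a *: x + y) = a * g x + g y) ->
  forall c x, g (c *: x) = c * g x.
Proof. by move=> H c x; have := H c x 0; rewrite !addr0 (flin0 H) addr0. Qed.
End Aux.

Theorem corollary2p9 (K : fieldType) (V : vectType K)
  (br : V -> V -> V) (f : V -> V -> K) (d : V -> V) :
  [pchar K] =i pred0 ->
  quadratic_lie br f ->
  is_derivation br d ->
  f_skew_symmetric f d ->
  is_reduced (dext_br br f d) <->
  [/\ ~ inner_derivation br d,
      (forall z : (K * V * K)%type,
         in_derived (dext_br br f d) z <->
         (z.1.1 = 0 /\ in_imd_plus_derived br d z.1.2)) &
      (forall x : V, in_center br x -> d x = 0 -> in_imd_plus_derived br d x)].
Proof.
move=> _ [[[bl br_] alt _] [fl _ fnd _]] [dl _] _.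
have brl : forall z, (forall a x y, br (a *: x + y) z = a *: br x z + br y z)
  by move=> z a x y; apply: bl.
have brr : forall z, (forall a x y, br z (a *: x + y) = a *: br z x + br z y)
  by move=> z a x y; apply: br_.
have fll : forall z, (forall a x y, f (a *: x + y) z = a * f x z + f y z)
  by move=> z a x y; apply: fl.
have d0 := lin0 dl; have dD := linD dl; have dZ := linZ dl; have dN := linN dl.
have br0 : forall z, br 0 z = 0 by move=> z; apply: (lin0 (brl z)).
have f0 : forall z, f 0 z = 0 by move=> z; apply: (flin0 (fll z)).
set D := dext_br br f d.
have Dadd : forall z1 z2, in_derived D z1 -> in_derived D z2 -> in_derived D (z1 + z2).
  move=> z1 z2 [s1 ->] [s2 ->]; exists (s1 ++ s2); by rewrite big_cat.
have Aadd : forall z1 z2, in_derived br z1 -> in_derived br z2 -> in_derived br (z1 + z2).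
  move=> z1 z2 [s1 ->] [s2 ->]; exists (s1 ++ s2); by rewrite big_cat.
have dchar : forall z, in_derived D z -> z.1.1 = 0 /\ in_imd_plus_derived br d z.1.2.
  move=> z [s ->]; elim: s => [|[[[l a] m] [[l' a'] m']] s [IH1 [u [w [Hw Hu]]]]].
    rewrite big_nil; split => //; exists 0, 0; split; first by exists [::]; rewrite big_nil.
    by rewrite d0 addr0.
  rewrite big_cons /=; split; first by rewrite IH1 addr0.
  exists ((l *: a' - l' *: a) + u), (br a a' + w); split.
    apply: (Aadd) => //; exists [:: (a, a')]; by rewrite big_seq1.
  rewrite Hu dD dD dN !dZ -!addrA; congr (_ + (_ + _)); exact: addrCA.
have Dsc : forall z c, in_derived D z -> in_derived D (c * z.1.1, c *: z.1.2, c * z.2).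
  move=> z c [s ->]; exists (map (fun p => ((c * p.1.1.1, c *: p.1.1.2, c * p.1.2), p.2)) s).
  elim: s => [|[[[l a] m] [[l' a'] m']] s IH]; first by rewrite !big_nil /= mulr0 scaler0.
  rewrite map_cons !big_cons -IH /=.
  congr (_, _, _).
  - by rewrite mulrDr mulr0.
  - by rewrite /= dZ (linZ (brl a')) !scalerDr scalerN !scalerA [l' * c]mulrC.
  - by rewrite /= dZ (flinZ (fll a')) mulrDr.
have build : in_derived D (0,0,1) -> forall x m, in_imd_plus_derived br d x -> in_derived D (0, x, m).
  move=> Hb x m [u [w [[t ->] ->]]].
  have Ht : in_derived D (0, \sum_(q<-t) br q.1 q.2, \sum_(q<-t) f (d q.1) q.2).
    elim: t => [|q t IH]; first by exists [::]; rewrite !big_nil.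
    rewrite !big_cons.
    have -> : (0, br q.1 q.2 + \sum_(q<-t) br q.1 q.2, f (d q.1) q.2 + \sum_(q<-t) f (d q.1) q.2)
       = D (0,q.1,0) (0,q.2,0) + (0, \sum_(q<-t) br q.1 q.2, \sum_(q<-t) f (d q.1) q.2).
      by rewrite /D /= !scale0r subrr add0r !pairD /= add0r.
    apply: (Dadd) => //; exists [:: ((0,q.1,0),(0,q.2,0))]; by rewrite big_seq1.
  set S' := \sum_(q<-t) f (d q.1) q.2.
  have Hm := Dsc _ (m - S') Hb.
  have Hu : in_derived D (0, d u, 0).
    exists [:: ((1,0,0),(0,u,0))]; rewrite big_seq1 /D /= d0 f0 scale1r scale0r subr0 br0 addr0.
    by [].
  have -> : (0, d u + \sum_(q<-t) br q.1 q.2, m) =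
     (0, d u, 0) + (0, \sum_(q<-t) br q.1 q.2, S') + ((m - S') * 0, (m - S') *: 0, (m - S') * 1).
    by rewrite !pairD /= mulr0 scaler0 mulr1 !addr0 add0r [S' + _]addrC subrK.
  by apply: (Dadd) => //; apply: (Dadd).
split.
- move=> Hred.
  have Hb : in_derived D (0,0,1).
    apply: Hred => -[[l' a'] m']; rewrite /D /= d0 br0 f0 scale0r scaler0 subrr addr0.
    by [].
  split.
  + move=> [c Hc].
    have Hcen : in_center D (1, -c, 0).
      move=> [[l' a'] m']; rewrite /D /= dN !Hc alt oppr0 f0 scaler0 subr0 scale1r.
      by rewrite (linN (brl a')) subrr.
    case: (dchar _ (Hred _ Hcen)) => /= /eqP; by rewrite oner_eq0.
  + move=> z; split; first exact: dchar.
    case: z => [[l x] m] /= [-> Hx]; exact: build Hb x m Hx.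
  + move=> x Hx Hdx.
    have Hcen : in_center D (0, x, 0).
      move=> [[l' a'] m']; rewrite /D /= Hdx (Hx a') f0 scale0r scaler0 subrr addr0.
      by [].
    by case: (dchar _ (Hred _ Hcen)).
- move=> [Hni Hz Hc] [[l a] m] Hzc.
  have Hda : d a = 0.
    apply: fnd => y; have := Hzc (0,y,0); rewrite /D /= => /(congr1 snd) /=; exact.
  have Hl : l = 0.
    case: (eqVneq l 0) => // Hl; exfalso; apply: Hni; exists (- (l^-1) *: a) => y.
    have := Hzc (0,y,0); rewrite /D /= => /(congr1 (fun p => p.1.2)) /=.
    rewrite scale0r subr0 => /eqP; rewrite addr_eq0 => /eqP E.
    by rewrite (linZ (brl y)) scaleNr -scalerN -E scalerA mulVf // scale1r.
  subst l.
  have Hca : in_center br a.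
    move=> y; have := Hzc (0,y,0); rewrite /D /= => /(congr1 (fun p => p.1.2)) /=.
    by rewrite !scale0r subrr add0r.
  apply: (Hz (0,a,m)).2; split => //=; exact: Hc.
Qed.
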